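(* Let $\vec W$ be an irreducible $\mathcal Y$-valued transition matrix on $\mathcal X$. For every $g'\in\mathcal G$ there exists a unique $g\in\mathcal G_1$ with $g-g'\in\mathcal N$. Consequently $\mathcal G_1$ is a complement of $\mathcal N$ in $\mathcal G$, and the quotient map restricts to a linear isomorphism $\mathcal G_1\cong\mathcal G/\mathcal N$.
   Context: Let $\mathcal X=\{1,\dots,d\}$, $\mathcal Y=\{1,\dots,d_Y\}$ be finite sets, $u_{\mathcal X}\in\mathbb R^{\mathcal X}$ the all-ones vector. A $\mathcal Y$-valued transition matrix on $\mathcal X$ is a family $\vec W=(W_y)_{y\in\mathcal Y}$ of $d\times d$ nonnegative matrices $W_y(x|x')$ ($x$ row, $x'$ column) with $|\vec W|:=\sum_yW_y$ column-stochastic; irreducible means $|\vec W|$ irreducible. Let $S:=\{(y,x,x'):W_y(x|x')>0\}$ be the support of $\vec W$ and $\mathcal G$ the vector space of real functions on $S$; an element $g\in\mathcal G$ is identified with the tuple $(g_y)_y$ of $d\times d$ matrices $g_y(x|x')=g(y,x,x')$ (set to $0$ off $S$). Define $(\vec W_*g)_y(x|x'):=g(y,x,x')W_y(x|x')$. $\mathcal N:=\{g\in\mathcal G:\ g(y,x,x')=f(x)-f(x')+c$ on $S$ for some $f:\mathcal X\to\mathbb R$, $c\in\mathbb R\}$. $\mathcal G_1:=\{g\in\mathcal G:\ \sum_{y}(\vec W_*g)_y^Tu_{\mathcal X}=0\}$, i.e. $\sum_{y,x}g(y,x,x')W_y(x|x')=0$ for all $x'$. *)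

(* Defs.v *)
From HB Require Import structures.
From mathcomp Require Import all_boot all_order all_algebra.
Set Implicit Arguments. Unset Strict Implicit. Unset Printing Implicit Defensive.
Import Order.TTheory GRing.Theory Num.Theory.
Local Open Scope ring_scope.

(* X = 'I_d, Y = 'I_dY.  A Y-valued transition matrix is W : 'I_dY -> 'M[R]_d,
   with W y x x' = W_y(x|x')  (x row, x' column). *)
Definition trans_mx (R : realFieldType) (d dY : nat) := 'I_dY -> 'M[R]_d.

Definition absW (R : realFieldType) (d dY : nat) (W : trans_mx R d dY) : 'M[R]_d :=
  \sum_(y < dY) W y.

Definition is_transition (R : realFieldType) (d dY : nat) (W : trans_mx R d dY) : Prop :=
  (forall y x x', 0 <= W y x x') /\
  (forall x' : 'I_d, \sum_(x < d) absW W x x' = 1).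

Definition irreducible_mx (R : realFieldType) (d : nat) (A : 'M[R]_d) : Prop :=
  forall i j : 'I_d, connect (fun a b : 'I_d => 0 < A b a) i j.

Definition irreducible_trans (R : realFieldType) (d dY : nat) (W : trans_mx R d dY) : Prop :=
  irreducible_mx (absW W).

Definition inS (R : realFieldType) (d dY : nat) (W : trans_mx R d dY)
  (y : 'I_dY) (x x' : 'I_d) : Prop := 0 < W y x x'.

(* Elements of G: real functions on S, identified with tuples of d x d
   matrices that vanish off S. *)
Definition gfun (R : realFieldType) (d dY : nat) := 'I_dY -> 'I_d -> 'I_d -> R.

Definition inG (R : realFieldType) (d dY : nat) (W : trans_mx R d dY) (g : gfun R d dY) : Prop :=
  forall y x x', ~ inS W y x x' -> g y x x' = 0.

Definition inN (R : realFieldType) (d dY : nat) (W : trans_mx R d dY) (g : gfun R d dY) : Prop :=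
  inG W g /\
  exists (f : 'I_d -> R) (c : R),
    forall y x x', inS W y x x' -> g y x x' = f x - f x' + c.

(* G_1 : sum_y (W_* g)_y^T u_X = 0 *)
Definition inG1 (R : realFieldType) (d dY : nat) (W : trans_mx R d dY) (g : gfun R d dY) : Prop :=
  inG W g /\
  forall x' : 'I_d, \sum_(y < dY) \sum_(x < d) g y x x' * W y x x' = 0.

Definition gsub (R : realFieldType) (d dY : nat) (g g' : gfun R d dY) : gfun R d dY :=
  fun y x x' => g y x x' - g' y x x'.

(* Main.v *)
Require Import Defs.
From HB Require Import structures.
From mathcomp Require Import all_boot all_order all_algebra.
From mathcomp Require Import zify ring lra.
From Stdlib Require Import FunctionalExtensionality.
Import Order.TTheory GRing.Theory Num.Theory.
Local Open Scope ring_scope.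

Section S.
Variables (R : realFieldType) (d : nat) (P : 'M[R]_d).
Hypothesis Pge0 : forall x x', 0 <= P x x'.
Hypothesis Psum : forall x', \sum_(x < d) P x x' = 1.
Hypothesis Pirr : irreducible_mx P.

Lemma maxpr (h : 'I_d -> R) :
  (forall x', 0 <= \sum_(x < d) P x x' * h x - h x') -> forall a b, h a = h b.
Proof.
move=> Hs a b.
case: (arg_maxP h (P := predT) (isT : predT a)) => m _ Hm.
have step : forall u v, h u = h m -> 0 < P v u -> h v = h m.
  move=> u v Hu Puv.
  have H1 : \sum_(x < d) P x u * (h x - h m) = 0.
    apply/eqP; rewrite eq_le; apply/andP; split.
      apply: sumr_le0 => x _; rewrite mulr_ge0_le0 // subr_le0; exact: Hm.
    rewrite (eq_bigr (fun x => P x u * h x - P x u * h m)); last by move=> x _; rewrite mulrBr.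
    by rewrite sumrB -mulr_suml Psum mul1r -Hu; exact: Hs.
  have H3 : P v u * (h v - h m) = 0.
    apply/eqP; rewrite -oppr_eq0; apply/eqP.
    apply: (psumr_eq0P (P:=predT) (F := fun x => - (P x u * (h x - h m)))) => //.
    - by move=> x _; rewrite oppr_ge0 mulr_ge0_le0 // subr_le0; exact: Hm.
    - by rewrite sumrN H1 oppr0.
  by move/eqP: H3; rewrite mulf_eq0 subr_eq0 (gt_eqF Puv) /= => /eqP.
have all : forall j, h j = h m.
  move=> j; have /connectP [p Hp ->] := Pirr m j.
  have gen : forall q u, h u = h m ->
      path (fun a b : 'I_d => 0 < P b a) u q -> h (last u q) = h m.
    elim=> [|v q IH] u Hu //= /andP [Huv Hq].
    by apply: (IH v) => //; rewrite (step u v).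
  exact: gen.
by rewrite !all.
Qed.

Lemma harm (h : 'I_d -> R) (k : R) :
  (forall x', \sum_(x < d) P x x' * h x - h x' + k = 0) ->
  (forall a b, h a = h b) /\ (forall x0 : 'I_d, k = 0).
Proof.
move=> Hk.
have hc : forall a b, h a = h b.
  case: (lerP k 0) => hk.
    apply: (@maxpr h) => x'; have := Hk x'; move=> e; lra.
  move=> a b; suff : (fun x => - h x) a = (fun x => - h x) b by move=> /= /eqP; rewrite eqr_opp => /eqP.
  apply: (@maxpr (fun x => - h x)) => x'; have e := Hk x'.
  rewrite (eq_bigr (fun x => - (P x x' * h x))); last by move=> x _; rewrite mulrN.
  rewrite sumrN; lra.
split=> // x0; have := Hk x0.
rewrite (eq_bigr (fun x => P x x0 * h x0)); last by move=> x _; rewrite (hc x x0).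
by rewrite -mulr_suml Psum mul1r subrr add0r.
Qed.

Definition M : 'M[R]_(1 + d, d) := col_mx (const_mx 1) (P - 1%:M).

Lemma rowM (c : 'rV[R]_1) (f : 'rV[R]_d) x' :
  (row_mx c f *m M) 0 x' = \sum_(x < d) P x x' * f 0 x - f 0 x' + c 0 0.
Proof.
rewrite /M mul_row_col mulmxBr mulmx1 !mxE big_ord1 !mxE mulr1 addrC.
by congr (_ - _ + _); apply: eq_bigr => x _; rewrite mulrC.
Qed.

Lemma solve (r : 'I_d -> R) :
  exists f : 'I_d -> R, exists c : R, forall x', \sum_(x < d) P x x' * f x - f x' + c = r x'.
Proof.
case: (posnP d) => [d0|dpos].
  by exists (fun _ => 0), 0 => x'; have := ltn_ord x'; rewrite {2}d0.
pose x0 : 'I_d := Ordinal dpos.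
pose e : 'rV[R]_(1 + d) := row_mx 0 (const_mx 1).
have rk : \rank M = d.
  apply/eqP; rewrite eqn_leq rank_leq_col /=.
  have : (\rank (kermx M) <= 1)%N.
    apply: leq_trans (rank_leq_row e); apply: mxrankS; apply/row_subP => i.
    have Hu : row i (kermx M) *m M = 0 by rewrite -row_mul mulmx_ker row0.
    move: (row i (kermx M)) Hu => u Hu.
    rewrite -(hsubmxK u) in Hu *.
    move: (lsubmx u) (rsubmx u) Hu => c f Hu.
    have Heq : forall x', \sum_(x < d) P x x' * f 0 x - f 0 x' + c 0 0 = 0.
      by move=> x'; rewrite -rowM Hu mxE.
    have [hc k0] := @harm (fun x => f 0 x) (c 0 0) Heq.
    apply/submxP; exists ((f 0 x0)%:M); rewrite mul_scalar_mx.
    apply/rowP => j; rewrite !mxE; case: splitP => j' _; rewrite !mxE.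
      by rewrite ord1 (k0 x0) mulr0.
    by rewrite mulr1 (hc j' x0).
  rewrite mxrank_ker => H; lia.
have full : row_full M by rewrite /row_full rk.
have /submxP [D HD] := submx_full (\row_x r x) full.
exists (fun x => rsubmx D 0 x), (lsubmx D 0 0) => x'.
have := congr1 (fun A : 'rV[R]_d => A 0 x') HD.
by rewrite mxE -{1}(hsubmxK D) rowM => ->.
Qed.
End S.

Lemma sumG (R : realFieldType) (d dY : nat) (W : trans_mx R d dY)
  (Wge0 : forall y x x', 0 <= W y x x')
  (Wsum : forall x' : 'I_d, \sum_(x < d) absW W x x' = 1) (g g' : gfun R d dY) (f : 'I_d -> R) (c : R) :
  (forall y x x', inS W y x x' -> g y x x' = g' y x x' + (f x - f x' + c)) ->
  forall x', \sum_(y < dY) \sum_(x < d) g y x x' * W y x x' =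
    \sum_(y < dY) \sum_(x < d) g' y x x' * W y x x' +
    (\sum_(x < d) absW W x x' * f x - f x' + c).
Proof.
move=> Hg x'.
have Pe : forall x, absW W x x' = \sum_(y < dY) W y x x' by move=> x; rewrite /absW summxE.
rewrite (eq_bigr (fun y => \sum_(x < d) (g' y x x' * W y x x' + (f x - f x' + c) * W y x x'))); last first.
  move=> y _; apply: eq_bigr => x _.
  have := Wge0 y x x'; rewrite le_eqVlt => /orP [/eqP <-|HS].
    by rewrite !mulr0 addr0.
  by rewrite Hg // mulrDl.
rewrite (eq_bigr (fun y => \sum_(x < d) g' y x x' * W y x x' + \sum_(x < d) (f x - f x' + c) * W y x x')); last by move=> y _; rewrite big_split.
rewrite big_split /=; congr (_ + _).
rewrite exchange_big /=.
rewrite (eq_bigr (fun x => (f x - f x' + c) * absW W x x')); last by move=> x _; rewrite Pe mulr_sumr.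
rewrite (eq_bigr (fun x => absW W x x' * f x + absW W x x' * (c - f x'))); last by move=> x _; rewrite mulrC; ring.
rewrite big_split /= -mulr_suml.
rewrite Wsum; ring.
Qed.

Theorem mainTheorem8 (R : realFieldType) (d dY : nat) (W : trans_mx R d dY) :
  is_transition W -> irreducible_trans W ->
  forall g' : gfun R d dY, inG W g' ->
    exists! g : gfun R d dY, inG1 W g /\ inN W (gsub g g').
Proof.
move=> [Wge0 Wsum] Wirr g' Hg'.
have Pge0 : forall x x', 0 <= absW W x x'.
  by move=> x x'; rewrite /absW summxE; apply: sumr_ge0 => y _.
pose b := fun x' => \sum_(y < dY) \sum_(x < d) g' y x x' * W y x x'.
have [f [c Hfc]] := @solve _ _ _ Pge0 Wsum Wirr (fun x' => - b x').
pose G : gfun R d dY := fun y x x' => if 0 < W y x x' then g' y x x' + (f x - f x' + c) else 0.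
exists G.
split.
  split.
    split.
      by move=> y x x' nS; rewrite /G; case: ifP => // HS; case: nS.
    move=> x'; rewrite (@sumG _ _ _ W Wge0 Wsum G g' f c).
      by rewrite Hfc addrN.
    by move=> y x z HS; rewrite /inS in HS; rewrite /G HS.
  split.
    move=> y x x' nS; rewrite /gsub (Hg' _ _ _ nS) subr0.
    by rewrite /G; case: ifP => // HS; case: nS.
  exists f, c => y x x' HS; rewrite /inS in HS.
  by rewrite /gsub /G HS [X in X - _]addrC addrK.
move=> g1 [[Hg1 Hsum1] [HN [f1 [c1 Hf1]]]].
have eq1 : forall x', \sum_(x < d) absW W x x' * f1 x - f1 x' + c1 = - b x'.
  move=> x'; have := Hsum1 x'.
  rewrite (@sumG _ _ _ W Wge0 Wsum g1 g' f1 c1).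
    by move=> /eqP; rewrite addrC addr_eq0 => /eqP.
  move=> y x z HS; rewrite -(Hf1 _ _ _ HS) /gsub; ring.
have Hk : forall x', \sum_(x < d) absW W x x' * (f1 x - f x) - (f1 x' - f x') + (c1 - c) = 0.
  move=> x'.
  rewrite (eq_bigr (fun x => absW W x x' * f1 x - absW W x x' * f x)); last by move=> x _; rewrite mulrBr.
  rewrite sumrB; have := eq1 x'; have := Hfc x'; move=> e0 e1; lra.
have [hc k0] := @harm _ _ _ Pge0 Wsum Wirr (fun x => f1 x - f x) (c1 - c) Hk.
rewrite /G; apply: functional_extensionality => y.
apply: functional_extensionality => x.
apply: functional_extensionality => x'.
case: ifP => HS.
  have e1 := Hf1 y x x' HS; rewrite /gsub in e1.
  have e2 := hc x x'; have e3 := k0 x; simpl in e2.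
  move: e1 e2 e3; clear; move=> e1 e2 e3; lra.
by rewrite Hg1 // /inS HS.
Qed.
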